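(* Let $(\mathcal{F}_\alpha)_{\alpha<\omega_1}$ be a transfinite family and let $\alpha<\beta<\omega_1$ and $\gamma<\omega_1$. Then (a) there is $m\in\mathbb{N}$ with $(\mathcal{F}_\alpha\cap[\{m,m+1,\dots\}]^{<\infty})\sqcup\mathcal{F}_\gamma\subset(\mathcal{F}_\beta\cap[\{m,m+1,\dots\}]^{<\infty})\sqcup\mathcal{F}_\gamma$, and (b) for every infinite $N\subset\mathbb{N}$, $\mathbb{I}(\mathcal{F}_\alpha\sqcup\mathcal{F}_\gamma,N)<\mathbb{I}(\mathcal{F}_\beta\sqcup\mathcal{F}_\gamma,N)$.
   Context: For sets $\mathcal{A},\mathcal{B}$ of finite subsets of $\mathbb{N}$, $\mathcal{A}\sqcup\mathcal{B}=\{A\cup B:A\in\mathcal{A},B\in\mathcal{B}\}$. Transfinite family: given, for each countable limit ordinal $\alpha$, finite sets $A_n(\alpha)\subset[0,\alpha)$ increasing in $n$ with $\max A_n(\alpha)\to\alpha$, set $\mathcal{F}_0=\{\emptyset\}$, $\mathcal{F}_{\beta+1}=\{\{n\}\cup E:n\in\mathbb{N},E\in\mathcal{F}_\beta\}\cup\{\emptyset\}$, and for limit $\alpha$, $\mathcal{F}_\alpha=\{\emptyset\}\cup\{E\ne\emptyset:E\in\bigcup_{\beta\in A_{\min E}(\alpha)}\mathcal{F}_\beta\}$. For $N=\{n_1<n_2<\dots\}$, $\mathcal{F}^N=\{\{n_i:i\in E\}:E\in\mathcal{F}\}$. A hereditary $\mathcal{A}$ is $\alpha$-large on infinite $P$ if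 every infinite $M\subset P$ contains an infinite $N$ with $\mathcal{F}_\alpha^N\subset\mathcal{A}$; $\mathbb{I}(\mathcal{A},P)=\sup\{\alpha<\omega_1:\mathcal{A}\text{ is }\alpha\text{-large on }P\}$. *)

(* Defs.v *)
From mathcomp Require Import all_boot.
From mathcomp Require Import finmap.
From Stdlib Require List.

Set Implicit Arguments.
Unset Strict Implicit.
Unset Printing Implicit Defensive.

Local Open Scope fset_scope.

(* Countable ordinals: an abstract strict order [lt] on a type [O]    *)

Section Ordinals.
Variables (O : Type) (lt : O -> O -> Prop).

Definition ole (x y : O) : Prop := lt x y \/ x = y.

Record omega1_like : Prop := Omega1Like {
  o_irrefl : forall x, ~ lt x x;
  o_trans : forall x y z, lt x y -> lt y z -> lt x z;
  o_total : forall x y, lt x y \/ x = y \/ lt y x;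
  o_wf : well_founded lt;
  o_countable_segments : forall b, exists f : O -> nat,
      forall x y, lt x b -> lt y b -> f x = f y -> x = y;
  o_countable_bounded : forall s : nat -> O, exists b, forall n, lt (s n) b
}.

Definition is_zero (a : O) : Prop := forall x, ~ lt x a.
Definition is_succ (b a : O) : Prop := lt b a /\ forall x, lt b x -> ole a x.
Definition is_limit (a : O) : Prop := ~ is_zero a /\ ~ (exists b, is_succ b a).

Record transfinite_family (A : O -> nat -> seq O)
    (F : O -> {fset nat} -> Prop) : Prop := TFamily {
  tf_A_below : forall a, is_limit a -> forall n x, List.In x (A a n) -> lt x a;
  tf_A_incr : forall a, is_limit a -> forall n x,
      List.In x (A a n) -> List.In x (A a n.+1);
  tf_A_nonempty : forall a, is_limit a -> forall n, A a n <> [::];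
  tf_A_max_cvg : forall a, is_limit a -> forall b, lt b a ->
      exists n0, forall n, n0 <= n -> exists x, List.In x (A a n) /\ lt b x;
  tf_zero : forall a, is_zero a -> forall E, F a E <-> E = fset0;
  tf_succ : forall b a, is_succ b a -> forall E,
      F a E <-> (E = fset0 \/ exists (n : nat) E', F b E' /\ E = n |` E');
  tf_limit : forall a, is_limit a -> forall E,
      F a E <-> (E = fset0 \/
        (E <> fset0 /\ exists k, k \in E /\ (forall x, x \in E -> k <= x) /\
           exists b, List.In b (A a k) /\ F b E))
}.

End Ordinals.

Definition fam_join (FA FB : {fset nat} -> Prop) : {fset nat} -> Prop :=
  fun X => exists E1 E2, FA E1 /\ FB E2 /\ X = E1 `|` E2.

Definition fam_above (FA : {fset nat} -> Prop) (m : nat) : {fset nat} -> Prop :=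
  fun E => FA E /\ forall x, x \in E -> m <= x.

Definition fam_sub (FA FB : {fset nat} -> Prop) : Prop := forall E, FA E -> FB E.

(* Infinite subsets of N are represented by their strictly increasing
   enumerations N = {N 0 < N 1 < ...}. *)
Definition strict_incr (N : nat -> nat) : Prop := forall i j, i < j -> N i < N j.

Definition fam_spread (FA : {fset nat} -> Prop) (N : nat -> nat) : {fset nat} -> Prop :=
  fun X => exists E, FA E /\ X = [fset N i | i in E].

Definition infinite_set (P : nat -> Prop) : Prop := forall k, exists n, k <= n /\ P n.

Section Index.
Variables (O : Type) (lt : O -> O -> Prop) (F : O -> {fset nat} -> Prop).

Definition large (a : O) (FA : {fset nat} -> Prop) (P : nat -> Prop) : Prop :=
  forall M : nat -> nat, strict_incr M -> (forall i, P (M i)) ->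
    exists N : nat -> nat, strict_incr N /\ (forall i, exists j, N i = M j) /\
      fam_sub (fam_spread (F a) N) FA.

(* Values of the index live in ω₁ + 1 = option O, None standing for ω₁. *)
Definition ext_lt (x y : option O) : Prop :=
  match x, y with
  | Some a, Some b => lt a b
  | Some _, None => True
  | None, _ => False
  end.
Definition ext_le (x y : option O) : Prop := ext_lt x y \/ x = y.

Definition is_index (FA : {fset nat} -> Prop) (P : nat -> Prop) (x : option O) : Prop :=
  (forall a, large a FA P -> ext_le (Some a) x) /\
  (forall y, (forall a, large a FA P -> ext_le (Some a) y) -> ext_le x y).

End Index.

(* Main.v *)
Require Import Defs.
From mathcomp Require Import all_boot.
From mathcomp Require Import finmap.
From Stdlib Require Import Classical ClassicalEpsilon.
From Stdlib Require List.

Set Implicit Arguments.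
Unset Strict Implicit.
Unset Printing Implicit Defensive.
Local Open Scope fset_scope.

Section Main.
Variables (O : Type) (lt : O -> O -> Prop).
Hypothesis HO : omega1_like lt.
Variables (A : O -> nat -> seq O) (F : O -> {fset nat} -> Prop).
Hypothesis HF : transfinite_family lt A F.

Lemma ltirr x : ~ lt x x. Proof. exact: (o_irrefl HO). Qed.
Lemma lttr x y z : lt x y -> lt y z -> lt x z. Proof. exact: (o_trans HO). Qed.
Lemma lttot x y : lt x y \/ x = y \/ lt y x. Proof. exact: (o_total HO). Qed.
Lemma ltasym x y : lt x y -> lt y x -> False.
Proof. by move=> h1 h2; apply: (ltirr (lttr h1 h2)). Qed.

Lemma wf_min (P : O -> Prop) : (exists x, P x) ->
  exists x, P x /\ forall y, P y -> ~ lt y x.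
Proof.
move=> [x0 Px0]; apply: NNPP => H; apply: (_ : ~ P x0) Px0.
elim/(well_founded_ind (o_wf HO)): x0 => x IH Px.
apply: H; exists x; split => // y Py lyx; exact: (IH y lyx Py).
Qed.

Lemma trich a : is_zero lt a \/ (exists b, is_succ lt b a) \/ is_limit lt a.
Proof.
case: (classic (is_zero lt a)) => [|h1]; first by left.
case: (classic (exists b, is_succ lt b a)) => [|h2]; first by right; left.
by right; right; split.
Qed.

Lemma succ_ex a : exists s, is_succ lt a s.
Proof.
have [b hb] := o_countable_bounded HO (fun _ => a).
have [s [hs hmin]] := wf_min (ex_intro (fun x => lt a x) b (hb 0)).
exists s; split => // x ax.
case: (lttot s x) => [h|[h|h]]; [by left|by right|].
by case: (hmin x ax h).
Qed.

Lemma succ_le b s c : is_succ lt b s -> lt c s -> c = b \/ lt c b.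
Proof.
move=> [bs hs] cs; case: (lttot c b) => [h|[h|h]]; [by right|by left|].
by case: (hs c h) => [h'|h']; [case: (ltasym h' cs)|subst; case: (ltirr cs)].
Qed.

Lemma A_mono a : is_limit lt a -> forall n m x, n <= m ->
  List.In x (A a n) -> List.In x (A a m).
Proof.
move=> la n m x; elim: m => [|m IH]; first by rewrite leqn0 => /eqP ->.
rewrite leq_eqVlt => /orP [/eqP -> //|]; rewrite ltnS => h hx.
exact: (tf_A_incr HF la (IH h hx)).
Qed.

Lemma fset_min (E : {fset nat}) : E <> fset0 ->
  exists k, k \in E /\ forall x, x \in E -> k <= x.
Proof.
move=> /eqP /fset0Pn hE.
have hex : exists n, n \in E by [].
exists (ex_minn hex); case: ex_minnP => m hm hmin; split => // x; exact: hmin.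
Qed.

Lemma si_mono N : strict_incr N -> forall i j, i <= j -> N i <= N j.
Proof.
move=> hN i j; rewrite leq_eqVlt => /orP [/eqP -> //|h]; exact: ltnW (hN _ _ h).
Qed.
Lemma si_ge N : strict_incr N -> forall i, i <= N i.
Proof.
move=> hN; elim => [//|i IH]; exact: leq_ltn_trans IH (hN _ _ (ltnSn i)).
Qed.
Lemma si_refl N : strict_incr N -> forall i j, N i < N j -> i < j.
Proof.
move=> hN i j h; rewrite ltnNge; apply/negP => hji.
by have := si_mono hN hji; rewrite leqNgt h.
Qed.
Lemma si_succ N : (forall i, N i < N i.+1) -> strict_incr N.
Proof.
move=> h i j; elim: j => [//|j IH]; rewrite ltnS leq_eqVlt => /orP [/eqP ->//|hij].
exact: ltn_trans (IH hij) (h j).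
Qed.

Lemma F0 a : F a fset0.
Proof.
case: (trich a) => [z|[[b sb]|l]].
- by apply/(tf_zero HF z).
- by apply/(tf_succ HF sb); left.
- by apply/(tf_limit HF l); left.
Qed.

Lemma F_her a : forall E E', F a E -> E' `<=` E -> F a E'.
Proof.
elim/(well_founded_ind (o_wf HO)): a => a IH E E' hE sub.
case: (trich a) => [z|[[b sb]|l]].
- move/(tf_zero HF z): hE => hE; subst; apply/(tf_zero HF z).
  by apply/eqP; rewrite -fsubset0.
- move/(tf_succ HF sb): hE => [?|[n [E2 [h2 ?]]]]; subst.
    by apply/(tf_succ HF sb); left; apply/eqP; rewrite -fsubset0.
  apply/(tf_succ HF sb).
  case: (boolP (n \in E')) => hn.
    right; exists n, (E' `\ n); split; last by rewrite fsetD1K.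
    apply: (IH b (proj1 sb) E2) => //; apply/fsubsetP => x.
    rewrite in_fsetD1 => /andP [xn xE]; move/fsubsetP: sub => /(_ x xE).
    by rewrite in_fset1U (negbTE xn).
  have sub2 : E' `<=` E2.
    apply/fsubsetP => x xE; move/fsubsetP: sub => /(_ x xE).
    by rewrite in_fset1U => /orP [/eqP hx|//]; subst; rewrite xE in hn.
  case: (boolP (E' == fset0)) => [/eqP ->|/fset0Pn [y hy]]; first by left.
  right; exists y, E'; split; first exact: (IH b (proj1 sb) E2).
  by apply/fsetP => x; rewrite in_fset1U; case: eqP => // ->; rewrite hy.
- move/(tf_limit HF l): hE => [hE|[ne [k [kE [kmin [c [hc Fc]]]]]]].
    by apply/(tf_limit HF l); left; subst; apply/eqP; rewrite -fsubset0.
  apply/(tf_limit HF l).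
  case: (boolP (E' == fset0)) => [/eqP ->|ne']; first by left.
  have [k' [k'E k'min]] := fset_min (elimN eqP ne').
  right; split; first exact/eqP.
  exists k'; split => //; split => //; exists c; split.
    apply: (A_mono l _ hc); apply: kmin; exact: (fsubsetP sub).
  exact: (IH c (tf_A_below HF l hc) E).
Qed.

Lemma F_spread a : forall E N, strict_incr N -> F a E -> F a [fset N i | i in E].
Proof.
elim/(well_founded_ind (o_wf HO)): a => a IH E N hN hE.
case: (trich a) => [z|[[b sb]|l]].
- move/(tf_zero HF z): hE => ->; apply/(tf_zero HF z); exact: imfset0.
- move/(tf_succ HF sb): hE => [->|[n [E2 [h2 ->]]]].
    by apply/(tf_succ HF sb); left; exact: imfset0.
  apply/(tf_succ HF sb); right; exists (N n), [fset N i | i in E2]; split.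
    exact: (IH b (proj1 sb)).
  exact: imfsetU1.
- move/(tf_limit HF l): hE => [->|[ne [k [kE [kmin [c [hc Fc]]]]]]].
    by apply/(tf_limit HF l); left; exact: imfset0.
  apply/(tf_limit HF l); right; split.
    move=> h; have : N k \in [fset N i | i in E] by apply: in_imfset.
    by rewrite h.
  exists (N k); split; first by apply: in_imfset.
  split.
    move=> x /imfsetP [y /= yE ->]; apply: si_mono => //; exact: kmin.
  exists c; split; first exact: (A_mono l (si_ge hN k) hc).
  exact: (IH c (tf_A_below HF l hc)).
Qed.

Lemma F_succ_sub c s E : is_succ lt c s -> F c E -> F s E.
Proof.
move=> sc hE; apply/(tf_succ HF sc).
case: (boolP (E == fset0)) => [/eqP ->|/fset0Pn [y hy]]; first by left.
right; exists y, E; split => //.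
by apply/fsetP => x; rewrite in_fset1U; case: eqP => // ->; rewrite hy.
Qed.

Lemma partA b : forall a, lt a b -> exists m, forall E, F a E ->
  (forall x, x \in E -> m <= x) -> F b E.
Proof.
elim/(well_founded_ind (o_wf HO)): b => b IH a ab.
case: (trich b) => [z|[[c sc]|l]].
- by case: (z a).
- case: (succ_le sc ab) => [->|ac].
    by exists 0 => E hE _; exact: (F_succ_sub sc).
  have [m hm] := IH c (proj1 sc) a ac.
  by exists m => E hE hm2; apply: (F_succ_sub sc); apply: hm.
- have [n0 hn0] := tf_A_max_cvg HF l ab.
  have [x [hx ax]] := hn0 n0 (leqnn _).
  have [m hm] := IH x (tf_A_below HF l hx) a ax.
  exists (maxn n0 m) => E hE hmE; apply/(tf_limit HF l).
  case: (boolP (E == fset0)) => [/eqP ->|ne]; first by left.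
  have [k [kE kmin]] := fset_min (elimN eqP ne).
  right; split; first exact/eqP.
  exists k; split => //; split => //; exists x; split.
    apply: (A_mono l _ hx); apply: leq_trans (hmE k kE); exact: leq_maxl.
  apply: hm => // y yE; apply: leq_trans (hmE y yE); exact: leq_maxr.
Qed.


Definition subs (N M : nat -> nat) :=
  exists t, strict_incr t /\ forall i, N i = M (t i).

Lemma subs_of N M : strict_incr N -> strict_incr M ->
  (forall i, exists j, N i = M j) -> subs N M.
Proof.
move=> hN hM h.
pose t i := epsilon (inhabits 0) (fun j => N i = M j).
have ht i : N i = M (t i) by apply: (epsilon_spec (inhabits 0) _ (h i)).
exists t; split => // i j ij; apply: (si_refl hM); rewrite -!ht; exact: hN.
Qed.

Lemma subs_refl M : subs M M.
Proof. exists id; split => // i j. Qed.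

Lemma subs_trans N Q M : subs N Q -> subs Q M -> subs N M.
Proof.
move=> [t1 [h1 e1]] [t2 [h2 e2]]; exists (fun i => t2 (t1 i)); split.
  by move=> i j ij; apply: h2; apply: h1.
by move=> i; rewrite e1 e2.
Qed.

Lemma subs_si N M : subs N M -> strict_incr M -> strict_incr N.
Proof. by move=> [t [ht e]] hM i j ij; rewrite !e; apply: hM; apply: ht. Qed.

Lemma subs_mem N M : subs N M -> forall i, exists j, N i = M j.
Proof. by move=> [t [ht e]] i; exists (t i). Qed.

Lemma imfset_compE (N M t : nat -> nat) (E : {fset nat}) :
  (forall i, i \in E -> N i = M (t i)) ->
  [fset N i | i in E] = [fset M i | i in [fset t i | i in E]].
Proof.
move=> h; apply/fsetP => x; apply/imfsetP/imfsetP => /=.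
  move=> [i iE ->]; exists (t i); [by apply: in_imfset|exact: h].
move=> [j /imfsetP [i /= iE ->] ->]; exists i => //; by rewrite h.
Qed.

Lemma spread_sub b Q N : subs Q N ->
  fam_sub (fam_spread (F b) Q) (fam_spread (F b) N).
Proof.
move=> [t [ht e]] X [E [hE ->]]; exists [fset t i | i in E]; split.
  exact: F_spread.
by apply: imfset_compE => i _; apply: e.
Qed.

Lemma shift_si N m : strict_incr N -> strict_incr (fun i => N (i + m)%N).
Proof. by move=> hN i j ij; apply: hN; rewrite ltn_add2r. Qed.

Lemma addm_si m : strict_incr (fun i => (i + m)%N).
Proof. by move=> i j ij; rewrite ltn_add2r. Qed.

Lemma shiftE (N : nat -> nat) m (E : {fset nat}) :
  [fset N (i + m)%N | i in E] = [fset N i | i in [fset (i + m)%N | i in E]].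
Proof. by apply: imfset_compE. Qed.

Lemma large0 z FA P : is_zero lt z -> FA fset0 -> large F z FA P.
Proof.
move=> hz h0 M hM hP; exists M; split => //; split; first by move=> i; exists i.
by move=> X [E [/(tf_zero HF hz) -> ->]]; rewrite imfset0.
Qed.

Lemma large_down a c FA P : large F a FA P -> lt c a -> large F c FA P.
Proof.
move=> hl ca M hM hP.
have [N [hN [hNM hsub]]] := hl M hM hP.
have [m hm] := partA ca.
exists (fun i => N (i + m)%N); split; first exact: shift_si.
split; first by move=> i; apply: hNM.
move=> X [E [hE ->]]; apply: hsub; exists [fset (i + m)%N | i in E]; split.
  apply: hm; first exact: (F_spread (addm_si m)).
  by move=> x /imfsetP [i /= _ ->]; apply: leq_addl.
exact: shiftE.
Qed.

Lemma refine FA P M l : is_limit lt l -> (forall d, lt d l -> large F d FA P) ->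
  strict_incr M -> (forall i, P (M i)) ->
  forall L : seq O, (forall b, List.In b L -> lt b l) ->
  forall Q, subs Q M -> exists Q', subs Q' Q /\
     forall b, List.In b L -> fam_sub (fam_spread (F b) Q') FA.
Proof.
move=> hl hlarge hM hP; elim => [|b L IH] hL Q hQ.
  by exists Q; split => //; exact: subs_refl.
have [Q1 [h1 g1]] := IH (fun b' h => hL b' (or_intror h)) Q hQ.
have hQ1 : subs Q1 M := subs_trans h1 hQ.
have sQ1 := subs_si hQ1 hM.
have [Q2 [sQ2 [hQ2 hsub2]]] := hlarge b (hL b (or_introl erefl)) Q1 sQ1
  (fun i => let: ex_intro j e := subs_mem hQ1 i in eq_ind_r P (hP j) e).
have s21 : subs Q2 Q1 := subs_of sQ2 sQ1 hQ2.
exists Q2; split; first exact: subs_trans s21 h1.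
move=> b' [<-|hb'] //.
move=> X hX; apply: (g1 b' hb'); exact: (spread_sub s21).
Qed.

Lemma large_diag l FA P : is_limit lt l ->
  (forall d, lt d l -> large F d FA P) -> large F l FA P.
Proof.
move=> hl hlarge M hM hP.
pose good k Q := forall b, List.In b (A l k) -> fam_sub (fam_spread (F b) Q) FA.
have H k Q : exists Q', subs Q M -> subs Q' Q /\ good k Q'.
  case: (classic (subs Q M)) => hQ; last by exists Q.
  have [Q' hQ'] := refine hl hlarge hM hP (tf_A_below HF hl (n:=k)) hQ.
  by exists Q'.
pose step k Q := epsilon (inhabits M) (fun Q' => subs Q M -> subs Q' Q /\ good k Q').
have hstep k Q : subs Q M -> subs (step k Q) Q /\ good k (step k Q).
  exact: (epsilon_spec (inhabits M) _ (H k Q)).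
pose Ns : nat -> nat -> nat := nat_rect _ (step 0 M) (fun k' Q => step k'.+1 Q).
have hNs k : subs (Ns k) M /\ good k (Ns k).
  elim: k => [|k [IH1 IH2]].
    have [h1 h2] := hstep 0 M (subs_refl M); split => //.
  have [h1 h2] := hstep k.+1 (Ns k) IH1; split => //; exact: subs_trans h1 IH1.
have hsi k : strict_incr (Ns k) := subs_si (proj1 (hNs k)) hM.
have hnest k j : k <= j -> subs (Ns j) (Ns k).
  elim: j => [|j IH]; first by rewrite leqn0 => /eqP ->; apply: subs_refl.
  rewrite leq_eqVlt => /orP [/eqP ->|]; first exact: subs_refl.
  rewrite ltnS => kj; apply: subs_trans (IH kj).
  exact: (proj1 (hstep j.+1 (Ns j) (proj1 (hNs j)))).
pose D i := Ns i i.
have hD : strict_incr D.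
  apply: si_succ => i; rewrite /D.
  have [t [ht e]] := hnest i i.+1 (leqnSn i).
  rewrite e; apply: hsi; apply: leq_trans (si_ge ht i.+1); exact: ltnSn.
exists D; split => //; split.
  by move=> i; apply: (subs_mem (proj1 (hNs i))).
move=> X [E [hE ->]].
move/(tf_limit HF hl): hE => [->|[ne [k [kE [kmin [b [hb Fb]]]]]]].
  rewrite imfset0.
  case e0: (A l 0) (tf_A_nonempty HF hl (n:=0)) => [|b0 s0] // _.
  have := (proj2 (hNs 0)) b0; rewrite e0 => /(_ (or_introl erefl)); apply.
  by exists fset0; split; [exact: F0|rewrite imfset0].
have hex i : k <= i -> exists j, Ns k j = D i.
  move=> ki; have [t [ht e]] := hnest k i ki; by exists (t i); rewrite /D e.
pose s i := if i < k then i else epsilon (inhabits 0) (fun j => Ns k j = D i).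
have hs i : k <= i -> Ns k (s i) = D i.
  move=> ki; rewrite /s ltnNge ki /=.
  exact: (epsilon_spec (inhabits 0) _ (hex i ki)).
have hsk i : k <= i -> k <= s i.
  move=> ki; rewrite leqNgt; apply/negP => h.
  have := hsi k _ _ h; rewrite hs // -/(D k).
  by rewrite ltnNge (si_mono hD ki).
have ss : strict_incr s.
  move=> i j ij; case: (ltnP j k) => jk.
    by rewrite /s jk (ltn_trans ij jk).
  case: (ltnP i k) => ik.
    rewrite {1}/s ik; exact: leq_trans ik (hsk j jk).
  apply: (si_refl (hsi k)); rewrite !hs //; exact: hD.
apply: ((proj2 (hNs k)) b hb); exists [fset s i | i in E]; split.
  exact: F_spread.
by apply: imfset_compE => i iE; rewrite hs //; apply: kmin.
Qed.

Lemma large_succ a0 b0 g d s P : lt a0 b0 -> is_succ lt d s ->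
  large F d (fam_join (F a0) (F g)) P -> large F s (fam_join (F b0) (F g)) P.
Proof.
move=> ab sd hl.
have [a1 sa1] := succ_ex a0.
have [m hm] : exists m, forall E, F a1 E -> (forall x, x \in E -> m <= x) -> F b0 E.
  case: (lttot a1 b0) => [h|[h|h]]; first exact: partA.
    by subst; exists 0.
  case: (succ_le sa1 h) => [e|h2]; first by subst; case: (ltirr ab).
  by case: (ltasym ab h2).
move=> M hM hP.
have [N [hN [hNM hsub]]] := hl M hM hP.
exists (fun i => N (i + m)%N); split; first exact: shift_si.
split; first by move=> i; apply: hNM.
move=> X [E [hE ->]].
move/(tf_succ HF sd): hE => [->|[n [E' [hE' ->]]]].
  by rewrite imfset0; exists fset0, fset0; split; [exact: F0|split; [exact: F0|by rewrite fsetU0]].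
have [E1 [E2 [h1 [h2 e12]]]] : fam_join (F a0) (F g) [fset N (i + m)%N | i in E'].
  apply: hsub; exists [fset (i + m)%N | i in E']; split; last exact: shiftE.
  exact: (F_spread (addm_si m)).
exists (N (n + m)%N |` E1), E2; split; last first.
  by split => //; rewrite imfsetU1 e12 fsetUA.
apply: hm.
  by apply/(tf_succ HF sa1); right; exists (N (n + m)%N), E1.
move=> x; rewrite in_fset1U => /orP [/eqP ->|xE1].
  apply: leq_trans (si_ge hN _); exact: leq_addl.
have : x \in [fset N (i + m)%N | i in E'] by rewrite e12 in_fsetU xE1.
move=> /imfsetP [i /= _ ->]; apply: leq_trans (si_ge hN _); exact: leq_addl.
Qed.


Lemma fbound (E : {fset nat}) : exists B, forall x, x \in E -> x <= B.
Proof.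
exists (\max_(y <- E) y) => x xE.
have := @leq_bigmax_seq _ (enum_fset E) xpredT id x.
by apply.
Qed.

Inductive G (FA : {fset nat} -> Prop) : {fset nat} -> O -> Prop :=
| Gi E d : FA E -> (forall d', lt d' d -> forall k, exists n, k <= n /\ G FA (n |` E) d') ->
    G FA E d.

Lemma G_mem FA E d : G FA E d -> FA E.
Proof. by case. Qed.

Lemma G_ch FA E d : G FA E d -> forall d', lt d' d -> forall k,
  exists n, k <= n /\ G FA (n |` E) d'.
Proof. by case. Qed.

Lemma G_down FA E d d' : G FA E d -> lt d' d \/ d' = d -> G FA E d'.
Proof.
case => E0 d0 h1 h2 [h|->]; last exact: Gi.
apply: Gi => // d'' h'' k; apply: h2 => //; exact: lttr h'' h.
Qed.

Lemma G_mono FA FB d : fam_sub FA FB -> forall E, G FA E d -> G FB E d.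
Proof.
move=> hs; elim/(well_founded_ind (o_wf HO)): d => d IH E hG.
apply: Gi; first exact: hs (G_mem hG).
move=> d' h k; have [n [kn hn]] := G_ch hG h k.
by exists n; split => //; apply: IH.
Qed.

Lemma G_pref FB D d : forall E, G (fun X => FB (D `|` X)) E d -> G FB (D `|` E) d.
Proof.
elim/(well_founded_ind (o_wf HO)): d => d IH E hG.
apply: Gi; first exact: (G_mem hG).
move=> d' h k; have [n [kn hn]] := G_ch hG h k.
exists n; split => //; rewrite fsetUCA; exact: IH.
Qed.

Lemma G_low d : forall N, strict_incr N -> G (fam_spread (F d) N) fset0 d.
Proof.
elim/(well_founded_ind (o_wf HO)): d => d IH N hN.
have mem0 : fam_spread (F d) N fset0.
  by exists fset0; split; [exact: F0|rewrite imfset0].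
case: (trich d) => [z|[[c sc]|l]].
- by apply: Gi => // d' h; case: (z d').
- apply: Gi => // d' h k; exists (N k); split; first exact: si_ge.
  apply: G_pref.
  apply: (@G_mono (fam_spread (F c) N)).
    move=> X [E [hE ->]]; exists (k |` E); split; last by rewrite imfsetU1.
    by apply/(tf_succ HF sc); right; exists k, E.
  apply: (G_down (IH c (proj1 sc) N hN)).
  by case: (succ_le sc h) => [->|?]; [right|left].
- apply: Gi => // d' h k.
  have [n0 hn0] := tf_A_max_cvg HF l h.
  have [x [hx dx]] := hn0 n0 (leqnn _).
  have hG := IH x (tf_A_below HF l hx) _ (shift_si n0 hN).
  have hG2 : G (fam_spread (F d) N) fset0 x.
    apply: (G_mono _ hG) => X [E [hE ->]].
    exists [fset (i + n0)%N | i in E]; split; last exact: shiftE.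
    apply/(tf_limit HF l).
    case: (boolP ([fset (i + n0)%N | i in E] == fset0)) => [/eqP ->|ne]; first by left.
    right; split; first exact/eqP.
    have [k' [k'E k'min]] := fset_min (elimN eqP ne).
    exists k'; split => //; split => //; exists x; split.
      apply: (A_mono l _ hx); move: k'E => /imfsetP [i /= _ ->]; exact: leq_addl.
    exact: (F_spread (addm_si n0)).
  exact: (G_ch hG2 dx k).
Qed.


Definition compact (FA : {fset nat} -> Prop) := forall X : nat -> Prop, infinite_set X ->
  exists E, (forall x, x \in E -> X x) /\ ~ FA E.
Definition hered (FA : {fset nat} -> Prop) := forall E E', FA E -> E' `<=` E -> FA E'.

Lemma inf_above X m : infinite_set X -> infinite_set (fun x => m <= x /\ X x).
Proof.
move=> hX k; have [n [kn Xn]] := hX (maxn k m); exists n; split.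
  exact: leq_trans (leq_maxl _ _) kn.
split => //; exact: leq_trans (leq_maxr _ _) kn.
Qed.

Lemma compact_F a : compact (F a).
Proof.
elim/(well_founded_ind (o_wf HO)): a => a IH X hX.
case: (trich a) => [z|[[c sc]|l]].
- have [x [_ Xx]] := hX 0; exists [fset x]; split.
    by move=> y; rewrite in_fset1 => /eqP ->.
  move/(tf_zero HF z) => h; have : x \in [fset x] by rewrite in_fset1.
  by rewrite h.
- have [E1 [h1 n1]] := IH c (proj1 sc) X hX.
  have [B hB] := fbound E1.
  have [E2 [h2 n2]] := IH c (proj1 sc) _ (inf_above B.+1 hX).
  exists (E1 `|` E2); split.
    by move=> x; rewrite in_fsetU => /orP [/h1|/h2 []].
  move/(tf_succ HF sc) => [e|[n [E' [hE' e]]]].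
    apply: n1; have : E1 `<=` fset0 by rewrite -e fsubsetUl.
    rewrite fsubset0 => /eqP ->; exact: F0.
  case: (boolP (n \in E1)) => hn.
    apply: n2; apply: (F_her hE'); apply/fsubsetP => x xE2.
    have : x \in n |` E' by rewrite -e in_fsetU xE2 orbT.
    rewrite in_fset1U => /orP [/eqP xn|//].
    have := hB n hn; have [hx _] := h2 x xE2; rewrite -xn => h.
    by have := leq_trans hx h; rewrite ltnn.
  apply: n1; apply: (F_her hE'); apply/fsubsetP => x xE1.
  have : x \in n |` E' by rewrite -e in_fsetU xE1.
  rewrite in_fset1U => /orP [/eqP xn|//].
  by subst; rewrite xE1 in hn.
- have [x0 [_ Xx0]] := hX 0.
  have hX' := inf_above x0 hX.
  have key : forall L : seq O, (forall b, List.In b L -> lt b a) ->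
    exists E, (forall x, x \in E -> x0 <= x /\ X x) /\ forall b, List.In b L -> ~ F b E.
    elim => [|b L IHL] hL; first by exists fset0; split.
    have [EL [hEL nEL]] := IHL (fun b' h => hL b' (or_intror h)).
    have [Eb [hEb nEb]] := IH b (hL b (or_introl erefl)) _ hX'.
    exists (EL `|` Eb); split.
      by move=> x; rewrite in_fsetU => /orP [/hEL|/hEb].
    move=> b' [<-|hb'] hF.
      by apply: nEb; apply: (F_her hF); exact: fsubsetUr.
    by apply: (nEL b' hb'); apply: (F_her hF); exact: fsubsetUl.
  have [E [hE nE]] := key (A a x0) (fun b h => tf_A_below HF l h).
  exists (x0 |` E); split.
    by move=> x; rewrite in_fset1U => /orP [/eqP ->|/hE []].
  move/(tf_limit HF l) => [e|[ne [k [kE [kmin [b [hb Fb]]]]]]].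
    have : x0 \in x0 |` E by rewrite fsetU11.
    by rewrite e.
  have ek : k = x0.
    have h1 : k <= x0 by apply: kmin; rewrite fsetU11.
    have h2 : x0 <= k.
      by move: kE; rewrite in_fset1U => /orP [/eqP ->//|/hE [] //].
    by apply/eqP; rewrite eqn_leq h1 h2.
  rewrite ek in hb; apply: (nE b hb); apply: (F_her Fb); exact: fsubsetU1.
Qed.

Lemma hered_F a : hered (F a).
Proof. by move=> E E' h s; apply: (F_her h). Qed.

Lemma hered_join FA FB : hered FA -> hered FB -> hered (fam_join FA FB).
Proof.
move=> hA hB E E' [E1 [E2 [h1 [h2 ->]]]] s.
exists (E' `&` E1), (E' `&` E2); split; first by apply: (hA _ _ h1); exact: fsubsetIr.
split; first by apply: (hB _ _ h2); exact: fsubsetIr.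
apply/fsetP => x; rewrite in_fsetU !in_fsetI -andb_orr.
case xE: (x \in E') => //=; by move/fsubsetP: s => /(_ x xE); rewrite in_fsetU.
Qed.

Lemma enum_inf X : infinite_set X -> exists e, strict_incr e /\ forall i, X (e i).
Proof.
move=> hX.
pose nx k := epsilon (inhabits 0) (fun n => k <= n /\ X n).
have hnx k : k <= nx k /\ X (nx k) := epsilon_spec (inhabits 0) _ (hX k).
pose e := nat_rect (fun _ => nat) (nx 0) (fun _ p => nx p.+1).
exists e; split; last by case => [|i] /=; apply: (proj2 (hnx _)).
apply: si_succ => i /=; exact: (proj1 (hnx _)).
Qed.

Lemma konig (c : nat -> nat -> bool) :
  exists f : nat -> bool, forall K, exists k, K <= k /\ forall i, i < K -> f i = c k i.
Proof.
pose Pp (f : nat -> bool) K := forall K', exists k, K' <= k /\ forall i, i < K -> f i = c k i.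
pose upd (f : nat -> bool) K b := fun i => if i == K then b else f i.
have step f K : Pp f K -> exists b, Pp (upd f K b) K.+1.
  move=> hP; apply: NNPP => hn.
  have hb b : exists K', forall k, K' <= k -> ~ forall i, i < K.+1 -> upd f K b i = c k i.
    apply: NNPP => h1; apply: hn; exists b => K'; apply: NNPP => h2; apply: h1; exists K'.
    by move=> k Kk h3; apply: h2; exists k.
  have [K1 h1] := hb true; have [K2 h2] := hb false.
  have [k [kk hk]] := hP (maxn K1 K2).
  have hk' b : c k K = b -> forall i, i < K.+1 -> upd f K b i = c k i.
    move=> <- i; rewrite ltnS leq_eqVlt => /orP [/eqP ->|iK]; first by rewrite /upd eqxx.
    by rewrite /upd (ltn_eqF iK) hk.
  case ck: (c k K).
    by apply: (h1 k (leq_trans (leq_maxl _ _) kk)); apply: hk'.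
  by apply: (h2 k (leq_trans (leq_maxr _ _) kk)); apply: hk'.
pose g f K := epsilon (inhabits true) (fun b => Pp f K -> Pp (upd f K b) K.+1).
have hg f K : Pp f K -> Pp (upd f K (g f K)) K.+1.
  have [b hb] : exists b, Pp f K -> Pp (upd f K b) K.+1.
    case: (classic (Pp f K)) => h; last by exists true.
    by have [b hb] := step f K h; exists b.
  exact: (epsilon_spec (inhabits true) (fun b => Pp f K -> Pp (upd f K b) K.+1) (ex_intro _ b hb)).
pose Fs := nat_rect (fun _ => nat -> bool) (fun _ => false) (fun K f => upd f K (g f K)).
have hFs K : Pp (Fs K) K.
  elim: K => [|K IH]; first by move=> K'; exists K'; split.
  exact: hg.
pose f i := Fs i.+1 i.
have agree K i : i < K -> Fs K i = f i.
  elim: K => [//|K IH]; rewrite ltnS leq_eqVlt => /orP [/eqP ->//|iK].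
  rewrite /= /upd (ltn_eqF iK); exact: IH.
exists f => K; have [k [kk hk]] := hFs K K; exists k; split => // i iK.
by rewrite -(agree K i iK) hk.
Qed.

Lemma compact_join FA FB : hered FA -> hered FB -> compact FA -> compact FB ->
  compact (fam_join FA FB).
Proof.
move=> hA hB cA cB X hX; apply: NNPP => hn.
have hall E : (forall x, x \in E -> X x) -> fam_join FA FB E.
  move=> hE; apply: NNPP => h; apply: hn; by exists E.
have [e [he hXe]] := enum_inf hX.
pose T k := [fset e i | i in iota 0 k].
have hT k : fam_join FA FB (T k).
  apply: hall => x /imfsetP [i /= _ ->]; exact: hXe.
pose pr k := epsilon (inhabits (fset0, fset0))
  (fun p : {fset nat} * {fset nat} => FA p.1 /\ FB p.2 /\ T k = p.1 `|` p.2).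
have hpr k : FA (pr k).1 /\ FB (pr k).2 /\ T k = (pr k).1 `|` (pr k).2.
  have [E1 [E2 [h1 [h2 h3]]]] := hT k.
  exact: (epsilon_spec (inhabits (fset0, fset0))
    (fun p : {fset nat} * {fset nat} => FA p.1 /\ FB p.2 /\ T k = p.1 `|` p.2)
    (ex_intro _ (E1, E2) (conj h1 (conj h2 h3)))).
have [f hf] := konig (fun k i => e i \in (pr k).1).
have hcol (bb : bool) E : (forall x, x \in E -> exists i, x = e i /\ f i = bb) ->
  exists k, E `<=` (if bb then (pr k).1 else (pr k).2).
  move=> hE; have [Bd hBd] := fbound E.
  have [k [kk hk]] := hf Bd.+1; exists k; apply/fsubsetP => x xE.
  have [i [ex fi]] := hE x xE; subst x.
  have iB : i < Bd.+1 by rewrite ltnS; apply: leq_trans (si_ge he i) (hBd _ xE).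
  have := hk i iB; rewrite fi => h.
  case: bb hE fi h => hE fi h //.
  have : e i \in T k.
    apply: in_imfset; rewrite /= mem_iota add0n; exact: leq_trans iB kk.
  by rewrite (proj2 (proj2 (hpr k))) in_fsetU -h.
case: (classic (infinite_set (fun x => exists i, x = e i /\ f i = true))) => [h0|h0].
  have [E [hE nE]] := cA _ h0; apply: nE.
  have [k hk] := hcol true E hE; exact: (hA _ _ (proj1 (hpr k)) hk).
case: (classic (infinite_set (fun x => exists i, x = e i /\ f i = false))) => [h1|h1].
  have [E [hE nE]] := cB _ h1; apply: nE.
  have [k hk] := hcol false E hE; exact: (hB _ _ (proj1 (proj2 (hpr k))) hk).
have [K0 hK0] : exists K, forall n, K <= n -> ~ exists i, n = e i /\ f i = true.
  apply: NNPP => h; apply: h0 => k; apply: NNPP => h'; apply: h; exists k => n kn hn'.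
  by apply: h'; exists n.
have [K1 hK1] : exists K, forall n, K <= n -> ~ exists i, n = e i /\ f i = false.
  apply: NNPP => h; apply: h1 => k; apply: NNPP => h'; apply: h; exists k => n kn hn'.
  by apply: h'; exists n.
pose i := maxn K0 K1.
case fi: (f i).
  by apply: (hK0 (e i)); [exact: leq_trans (leq_maxl _ _) (si_ge he i)|exists i].
by apply: (hK1 (e i)); [exact: leq_trans (leq_maxr _ _) (si_ge he i)|exists i].
Qed.


Lemma G_bounded (o0 : O) FA : hered FA -> compact FA -> exists d, ~ G FA fset0 d.
Proof.
move=> hA cA; apply: NNPP => hn.
have hU0 d : G FA fset0 d by apply: NNPP => h; apply: hn; exists d.
pose U E := forall d, G FA E d.
have stepU E k : U E -> exists n, k <= n /\ U (n |` E).
  move=> hE; apply: NNPP => h.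
  have hd i : exists d, ~ G FA ((i + k)%N |` E) d.
    apply: NNPP => h2; apply: h; exists (i + k)%N; split; first exact: leq_addl.
    move=> d; apply: NNPP => h3; apply: h2; by exists d.
  have [d0 _] := hd 0.
  pose s i := epsilon (inhabits d0) (fun d => ~ G FA ((i + k)%N |` E) d).
  have hs i : ~ G FA ((i + k)%N |` E) (s i).
    exact: (epsilon_spec (inhabits d0) (fun d => ~ G FA ((i + k)%N |` E) d) (hd i)).
  have [c hc] := o_countable_bounded HO s.
  have [c' hc'] := o_countable_bounded HO (fun _ => c).
  have [n [kn hnn]] := G_ch (hE c') (hc' 0) k.
  apply: (hs (n - k)%N); rewrite subnK //; exact: (G_down hnn (or_introl (hc _))).
pose h E := epsilon (inhabits 0) (fun n => U E -> (forall x, x \in E -> x < n) /\ U (n |` E)).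
have hh E : U E -> (forall x, x \in E -> x < h E) /\ U (h E |` E).
  have [B hB] := fbound E.
  have ex : exists n, U E -> (forall x, x \in E -> x < n) /\ U (n |` E).
    case: (classic (U E)) => hUE; last by exists 0.
    have [n [Bn hn2]] := stepU E B.+1 hUE; exists n => _; split => // x xE.
    exact: leq_ltn_trans (hB x xE) Bn.
  exact: (epsilon_spec (inhabits 0) (fun n => U E -> (forall x, x \in E -> x < n) /\ U (n |` E)) ex).
pose Es := nat_rect (fun _ => {fset nat}) fset0 (fun _ E => h E |` E).
pose e k := h (Es k).
have hUs k : U (Es k).
  elim: k => [|k IH]; first exact: hU0.
  exact: (proj2 (hh _ IH)).
have hlt k x : x \in Es k -> x < e k by move=> xE; exact: (proj1 (hh _ (hUs k))).
have ein k : e k \in Es k.+1 by rewrite /= fsetU11.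
have hmono k j : k <= j -> Es k `<=` Es j.
  elim: j => [|j IH]; first by rewrite leqn0 => /eqP ->; exact: fsubset_refl.
  rewrite leq_eqVlt => /orP [/eqP ->|]; first exact: fsubset_refl.
  rewrite ltnS => kj; apply: fsubset_trans (IH kj) _; exact: fsubsetU1.
have hes : strict_incr e.
  by apply: si_succ => k; apply: hlt; apply: ein.
have [E [hE nE]] := cA (fun x => exists k, x = e k)
  (fun k => ex_intro _ (e k) (conj (si_ge hes k) (ex_intro _ k erefl))).
apply: nE; have [B hB] := fbound E.
apply: (hA _ _ (G_mem (hUs B.+1 o0))); apply/fsubsetP => x xE.
have [j ej] := hE x xE; subst x.
have hle : j.+1 <= B.+1 by rewrite ltnS; apply: leq_trans (si_ge hes j) (hB _ xE).
exact: (fsubsetP (hmono j.+1 B.+1 hle)) _ (ein j).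
Qed.

Lemma sup_ex (S : O -> Prop) : exists x : option O,
  (forall a, S a -> ext_le lt (Some a) x) /\
  (forall y, (forall a, S a -> ext_le lt (Some a) y) -> ext_le lt x y).
Proof.
case: (classic (exists c, forall a, S a -> lt a c \/ a = c)) => [hc|hc].
  have [l [hl hmin]] := wf_min hc.
  exists (Some l); split.
    move=> a Sa; case: (hl a Sa) => [h|->]; [by left|by right].
  case => [yy|] hy; last by left.
  have ub : forall a, S a -> lt a yy \/ a = yy.
    by move=> a Sa; case: (hy a Sa) => [h|[->]]; [left|right].
  case: (lttot l yy) => [h|[->|h]]; [by left|by right|].
  by case: (hmin yy ub h).
exists None; split; first by move=> a _; left.
case => [yy|] hy; last by right.
case: hc; exists yy => a Sa; case: (hy a Sa) => [h|[->]]; [left|right] => //.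
Qed.

Lemma main_a a b g : lt a b -> exists m : nat,
  fam_sub (fam_join (fam_above (F a) m) (F g)) (fam_join (fam_above (F b) m) (F g)).
Proof.
move=> ab; have [m hm] := partA ab; exists m.
move=> X [E1 [E2 [[h1 h1'] [h2 ->]]]]; exists E1, E2; split => //.
split => //; exact: hm.
Qed.

Lemma main_b a b g : lt a b -> forall N : nat -> Prop, infinite_set N ->
  exists x y : option O,
    is_index lt F (fam_join (F a) (F g)) N x /\
    is_index lt F (fam_join (F b) (F g)) N y /\
    ext_lt lt x y.
Proof.
move=> hab N hN.
have hA := hered_join (@hered_F a) (@hered_F g).
have cA := compact_join (@hered_F a) (@hered_F g) (@compact_F a) (@compact_F g).
have [d hd] := G_bounded a hA cA.
have [M [hM hMN]] := enum_inf hN.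
have bnd c : large F c (fam_join (F a) (F g)) N -> lt c d.
  move=> hc; have [N' [hN' [_ hsub]]] := hc M hM hMN.
  have hG := G_mono hsub (G_low c hN').
  case: (lttot c d) => [//|[e|h]]; first by subst; case: (hd hG).
  by case: (hd (G_down hG (or_introl h))).
have [lam [hlam hmin]] := wf_min (ex_intro
  (fun c => forall a', large F a' (fam_join (F a) (F g)) N -> lt a' c \/ a' = c) d
  (fun a' h => or_introl (bnd a' h))).
have notub c : lt c lam -> exists a', large F a' (fam_join (F a) (F g)) N /\
    ~ (lt a' c \/ a' = c).
  move=> h; apply: NNPP => h2; apply: (hmin c _ h) => a' ha'.
  apply: NNPP => h3; apply: h2; by exists a'.
have lamin : large F lam (fam_join (F a) (F g)) N.
  case: (trich lam) => [z|[[mu smu]|l]].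
  - apply: large0 => //; exists fset0, fset0; split; first exact: F0.
    by split; [exact: F0|rewrite fsetU0].
  - have [a' [ha' na']] := notub mu (proj1 smu).
    case: (hlam a' ha') => [h|e]; last by rewrite -e.
    by case: (succ_le smu h) => [e|h2]; case: na'; [right|left].
  - apply: large_diag => // c hc.
    have [a' [ha' na']] := notub c hc.
    apply: (large_down ha').
    case: (lttot c a') => [//|[e|h]]; case: na'; [right|left] => //.
have [s ss] := succ_ex lam.
have hsB := large_succ hab ss lamin.
have [x hx] := sup_ex (fun c => large F c (fam_join (F a) (F g)) N).
have [y hy] := sup_ex (fun c => large F c (fam_join (F b) (F g)) N).
exists x, y; split; first exact: hx.
split; first exact: hy.
have xle := (proj2 hx) (Some lam)
  (fun a' h => match hlam a' h with or_introl h1 => or_introl h1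
                 | or_intror h1 => or_intror (f_equal Some h1) end).
have yge := (proj1 hy) s hsB.
case: x xle {hx} => [xx|] xle; last by case: xle => //.
case: y yge {hy} => [yy|] yge //=.
have xl : lt xx lam \/ xx = lam by case: xle => [h|[->]]; [left|right].
have sy : lt s yy \/ s = yy by case: yge => [h|[->]]; [left|right].
have ls := proj1 ss.
case: xl => [h1|->]; case: sy => [h2|<-] //.
- exact: lttr (lttr h1 ls) h2.
- exact: lttr h1 ls.
- exact: lttr ls h2.
Qed.

End Main.

Theorem proposition5p2 (O : Type) (lt : O -> O -> Prop) (HO : omega1_like lt)
    (A : O -> nat -> seq O) (F : O -> {fset nat} -> Prop)
    (HF : transfinite_family lt A F) (a b g : O) (hab : lt a b) :
  (exists m : nat,
     fam_sub (fam_join (fam_above (F a) m) (F g))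
             (fam_join (fam_above (F b) m) (F g))) /\
  (forall N : nat -> Prop, infinite_set N ->
     exists x y : option O,
       is_index lt F (fam_join (F a) (F g)) N x /\
       is_index lt F (fam_join (F b) (F g)) N y /\
       ext_lt lt x y).
Proof.
split; first exact: (main_a HO HF g hab).
exact: (main_b HO HF g hab).
Qed.
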